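(* Let $\Phi$ be an irreducible root system of rank $n$. There exists a subset $H_\Phi\subseteq[n]$ such that $$\mathcal H_\Phi=\{w(\breve\omega_k)^\perp\mid w\in W,\ k\in H_\Phi\}.$$ Furthermore, $H_\Phi$ is contained in the set of $h\in[n]$ such that the standard parabolic subsystem of $\Phi$ generated by $\Pi\setminus\{\alpha_h\}$ is irreducible.
   Context: $\Phi$ is a finite irreducible crystallographic root system in $E=\operatorname{span}_{\mathbb R}\Phi$ with inner product $(-,-)$, basis $\Pi=\{\alpha_1,\dots,\alpha_n\}$, Weyl group $W$. The fundamental coweights $\breve\omega_1,\dots,\breve\omega_n$ are the vectors of $E$ with $(\alpha_j,\breve\omega_i)=\delta_{ij}$; $W$ acts on them as vectors of $E$. $\mathcal P_\Phi=\operatorname{conv}(\Phi)$ and $\mathcal H_\Phi$ is the set of linear hyperplanes $\operatorname{span}_{\mathbb R}F$, $F$ a face of $\mathcal P_\Phi$ of dimension $n-2$. The standard parabolic subsystem generated by $\Gamma\subseteq\Pi$ is $\Phi\cap\operatorname{span}\Gamma$. *)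

(* Defs.v *)
From HB Require Import structures.
From mathcomp Require Import all_boot all_order all_algebra.
From mathcomp Require Import reals.
Set Implicit Arguments. Unset Strict Implicit. Unset Printing Implicit Defensive.
Import Order.TTheory GRing.Theory Num.Theory.
Local Open Scope ring_scope.

(* Ambient Euclidean space E = R^n (row vectors) with the standard inner
   product; every n-dimensional Euclidean space is isometric to it. *)
Section RootSystems.
Variables (R : realType) (n : nat).
Notation vec := 'rV[R]_n.

Definition dot (u v : vec) : R := (u *m v^T) 0 0.

(* Reflection s_a as a matrix acting on row vectors: v *m refl a = s_a(v). *)
Definition refl (a : vec) : 'M[R]_n :=
  1%:M - ((2 / dot a a) *: (a^T *m a)).

Definition is_root_system (Phi : seq vec) : Prop :=
  [/\ (0 \notin Phi),
      (forall v : vec, v \in <<Phi>>%VS),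
      (forall a c, a \in Phi -> c *: a \in Phi -> c = 1 \/ c = -1),
      (forall a b, a \in Phi -> b \in Phi -> b *m refl a \in Phi) &
      (forall a b, a \in Phi -> b \in Phi ->
         exists z : int, 2 * dot b a / dot a a = z%:~R)].

Definition irreducible (Phi : seq vec) : Prop :=
  forall P : pred vec,
    (exists2 a, a \in Phi & P a) -> (exists2 b, b \in Phi & ~~ P b) ->
    exists a b, [/\ a \in Phi, b \in Phi, P a, ~~ P b & dot a b != 0].

Definition is_base (Phi : seq vec) (Pi : 'I_n -> vec) : Prop :=
  [/\ (forall i, Pi i \in Phi),
      free [seq Pi i | i <- enum 'I_n] &
      (forall b, b \in Phi -> exists c : 'I_n -> int,
          b = \sum_i (c i)%:~R *: Pi i /\
          ((forall i, 0 <= c i) \/ (forall i, c i <= 0)))].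

Definition in_weyl (Phi : seq vec) (w : 'M[R]_n) : Prop :=
  exists s : seq vec, all (mem Phi) s /\ w = foldr mulmx 1%:M (map refl s).

Definition is_coweights (Pi omega : 'I_n -> vec) : Prop :=
  forall i j, dot (Pi j) (omega i) = (i == j)%:R.

Definition conv (Phi : seq vec) (x : vec) : Prop :=
  exists c : 'I_(size Phi) -> R,
    [/\ (forall i, 0 <= c i), \sum_i c i = 1 & x = \sum_i c i *: Phi`_i].

Definition is_face (P F : vec -> Prop) : Prop :=
  exists (a : vec) (c : R), (forall y, P y -> dot a y <= c) /\
    (forall x, F x <-> (P x /\ dot a x = c)).

Definition is_span (S : vec -> Prop) (V : {vspace vec}) : Prop :=
  (forall x, S x -> x \in V) /\
  (forall U : {vspace vec}, (forall x, S x -> x \in U) -> (V <= U)%VS).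

Definition has_dim (F : vec -> Prop) (d : nat) : Prop :=
  (exists x, F x) /\
  exists D, is_span (fun v => exists x y, [/\ F x, F y & v = x - y]) D
            /\ \dim D = d.

Definition in_HPhi (Phi : seq vec) (V : {vspace vec}) : Prop :=
  exists F : vec -> Prop,
    [/\ is_face (conv Phi) F, has_dim F (n - 2) & is_span F V].

Definition is_perp (V : {vspace vec}) (v : vec) : Prop :=
  forall x, (x \in V) = (dot x v == 0).

Definition parabolic (Phi : seq vec) (Pi : 'I_n -> vec) (h : 'I_n) : seq vec :=
  [seq b <- Phi | b \in <<[seq Pi j | j <- enum 'I_n & j != h]>>%VS].

End RootSystems.

(* Main.v *)
Require Import Defs.
From HB Require Import structures.
From mathcomp Require Import all_boot all_order all_algebra.
From mathcomp Require Import reals.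
From mathcomp Require Import ring lra zify.
From Stdlib Require Import Classical.
Set Implicit Arguments. Unset Strict Implicit. Unset Printing Implicit Defensive.
Import Order.TTheory GRing.Theory Num.Theory.
Local Open Scope ring_scope.


Lemma msq_ge0 (R : realType) (x : R) : 0 <= x * x.
Proof. by rewrite -expr2 sqr_ge0. Qed.

Section Basic.
Variables (R : realType) (n : nat).
Notation vec := 'rV[R]_n.
Implicit Types (u v x y a : vec).

Lemma dotE u v : dot u v = \sum_i u 0 i * v 0 i.
Proof. by rewrite /dot !mxE; apply: eq_bigr => i _; rewrite mxE. Qed.

Lemma dotC u v : dot u v = dot v u.
Proof. by rewrite !dotE; apply: eq_bigr => i _; rewrite mulrC. Qed.

Lemma dotDl u v x : dot (u + v) x = dot u x + dot v x.
Proof. by rewrite !dotE -big_split; apply: eq_bigr => i _; rewrite mxE mulrDl. Qed.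

Lemma dotZl c u x : dot (c *: u) x = c * dot u x.
Proof. by rewrite !dotE mulr_sumr; apply: eq_bigr => i _; rewrite mxE mulrA. Qed.

Lemma dotNl u x : dot (- u) x = - dot u x.
Proof. by rewrite -scaleN1r dotZl mulN1r. Qed.

Lemma dotBl u v x : dot (u - v) x = dot u x - dot v x.
Proof. by rewrite dotDl dotNl. Qed.

Lemma dot0l x : dot 0 x = 0.
Proof. by rewrite -(scale0r 0) dotZl mul0r. Qed.

Lemma dotDr u v x : dot x (u + v) = dot x u + dot x v.
Proof. by rewrite dotC dotDl !(dotC x). Qed.
Lemma dotZr c u x : dot x (c *: u) = c * dot x u.
Proof. by rewrite dotC dotZl dotC. Qed.
Lemma dotNr u x : dot x (- u) = - dot x u.
Proof. by rewrite dotC dotNl dotC. Qed.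
Lemma dotBr u v x : dot x (u - v) = dot x u - dot x v.
Proof. by rewrite dotDr dotNr. Qed.
Lemma dot0r x : dot x 0 = 0.
Proof. by rewrite dotC dot0l. Qed.

Lemma dot_suml I (r : seq I) (P : pred I) (F : I -> vec) x :
  dot (\sum_(i <- r | P i) F i) x = \sum_(i <- r | P i) dot (F i) x.
Proof.
elim/big_rec2: _ => [|i s y _ <-]; first by rewrite dot0l.
by rewrite dotDl.
Qed.

Lemma dot_sumr I (r : seq I) (P : pred I) (F : I -> vec) x :
  dot x (\sum_(i <- r | P i) F i) = \sum_(i <- r | P i) dot x (F i).
Proof. by rewrite dotC dot_suml; apply: eq_bigr => i _; rewrite dotC. Qed.

Lemma dot_ge0 u : 0 <= dot u u.
Proof. by rewrite dotE; apply: sumr_ge0 => i _; rewrite msq_ge0. Qed.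

Lemma dot_eq0 u : (dot u u == 0) = (u == 0).
Proof.
apply/idP/idP => [|/eqP->]; last by rewrite dot0l.
rewrite dotE => /eqP H; apply/eqP/rowP => i; rewrite mxE.
have := psumr_eq0P (P := predT) (fun j _ => msq_ge0 (u 0 j)) H (i := i) isT.
by move/eqP; rewrite mulf_eq0 orbb => /eqP.
Qed.

Lemma dot_gt0 u : u != 0 -> 0 < dot u u.
Proof. by move=> nz; rewrite lt_def dot_ge0 dot_eq0 nz. Qed.

Lemma dot_mulmx x M y : dot (x *m M) y = dot x (y *m M^T).
Proof. by rewrite /dot trmx_mul trmxK mulmxA. Qed.

Lemma reflE a v : v *m refl a = v - (2 * dot v a / dot a a) *: a.
Proof.
rewrite /refl mulmxBr mulmx1 -scalemxAr mulmxA.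
have -> : v *m a^T = (dot v a)%:M by rewrite [LHS]mx11_scalar.
by rewrite mul_scalar_mx scalerA mulrAC.
Qed.

Lemma refl_tr a : (refl a)^T = refl a.
Proof. by rewrite /refl linearB /= linearZ /= trmx_mul trmxK tr_scalar_mx. Qed.

Lemma reflK a v : a != 0 -> v *m refl a *m refl a = v.
Proof.
move=> nz; have aa : dot a a != 0 by rewrite dot_eq0.
rewrite !reflE dotBl dotZl.
set k := 2 * dot v a / dot a a.
have -> : 2 * (dot v a - k * dot a a) / dot a a = - k by rewrite /k; field.
by rewrite scaleNr opprK subrK.
Qed.

Lemma dot_refl a x y : a != 0 -> dot (x *m refl a) (y *m refl a) = dot x y.
Proof. by move=> nz; rewrite dot_mulmx refl_tr reflK. Qed.

Lemma refl_self a : a != 0 -> a *m refl a = - a.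
Proof.
move=> nz; have aa : dot a a != 0 by rewrite dot_eq0.
rewrite reflE.
have -> : 2 * dot a a / dot a a = 2 by field.
by rewrite scaler_nat mulr2n opprD addrA subrr sub0r.
Qed.

End Basic.


Section Weyl.
Variables (R : realType) (n : nat).
Notation vec := 'rV[R]_n.
Implicit Types (u v x y a : vec).

Definition Fw (s : seq vec) : 'M[R]_n := foldr mulmx 1%:M (map (@refl R n) s).

Lemma Fw_rcons s a : Fw (rcons s a) = Fw s *m refl a.
Proof.
elim: s => [|b s IH] /=; first by rewrite /Fw /= mulmx1 mul1mx.
by rewrite /Fw /= -/(Fw _) IH mulmxA.
Qed.

Lemma Fw_cons s a : Fw (a :: s) = refl a *m Fw s.
Proof. by []. Qed.

Lemma Fw_inv s x : all (fun a => a != 0) s -> x *m Fw s *m Fw (rev s) = x.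
Proof.
elim: s x => [|a s IH] x /=; first by rewrite /Fw /= !mulmx1.
case/andP=> nz als.
by rewrite Fw_cons rev_cons Fw_rcons !mulmxA IH // reflK.
Qed.

Lemma Fw_dot s x y : all (fun a => a != 0) s ->
  dot (x *m Fw s) (y *m Fw s) = dot x y.
Proof.
elim: s x y => [|a s IH] x y /=; first by rewrite /Fw /= !mulmx1.
case/andP=> nz als.
by rewrite Fw_cons !mulmxA IH // dot_refl.
Qed.

Variable Phi : seq vec.
Hypothesis nz : 0 \notin Phi.
Hypothesis hrefl : forall a b, a \in Phi -> b \in Phi -> b *m refl a \in Phi.

Lemma root_nz a : a \in Phi -> a != 0.
Proof. by apply: contraTneq => ->. Qed.

Lemma all_nz s : all (mem Phi) s -> all (fun a => a != 0) s.
Proof. by move/allP=> H; apply/allP => a /H; apply: root_nz. Qed.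

Lemma weyl_root w b : in_weyl Phi w -> b \in Phi -> b *m w \in Phi.
Proof.
case=> s [als ->]; rewrite -/(Fw s); elim: s b als => [|a s IH] b /=; first by rewrite /Fw /= mulmx1.
case/andP=> aP als bP; rewrite Fw_cons mulmxA; apply: IH => //; exact: hrefl.
Qed.

Lemma weyl_dot w x y : in_weyl Phi w -> dot (x *m w) (y *m w) = dot x y.
Proof. by case=> s [als ->]; rewrite -/(Fw s); rewrite Fw_dot // all_nz. Qed.

Lemma weyl_inv w : in_weyl Phi w -> exists w', [/\ in_weyl Phi w',
  (forall x, x *m w *m w' = x) & (forall x, x *m w' *m w = x)].
Proof.
case=> s [als ->]; rewrite -/(Fw s); exists (Fw (rev s)); split.
- by exists (rev s); rewrite all_rev.
- by move=> x; rewrite Fw_inv // all_nz.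
- by move=> x; rewrite -{2}(revK s) Fw_inv // all_nz // all_rev.
Qed.

Lemma weyl_refl w a : in_weyl Phi w -> a \in Phi -> in_weyl Phi (w *m refl a).
Proof.
case=> s [als ->] aP; rewrite -/(Fw s); exists (rcons s a); split; last by exact: (esym (Fw_rcons s a)).
by rewrite all_rcons /= aP.
Qed.

Lemma weyl1 : in_weyl Phi 1%:M.
Proof. by exists [::]. Qed.

End Weyl.

Section Img.
Variables (R : realType) (n : nat).
Notation vec := 'rV[R]_n.

Definition img (M : 'M[R]_n) (V : {vspace vec}) : {vspace vec} :=
  (linfun (mulmxr M) @: V)%VS.

Variables (M M' : 'M[R]_n).
Hypothesis MK : forall y : vec, y *m M *m M' = y.
Hypothesis M'K : forall y : vec, y *m M' *m M = y.

Lemma mem_img V x : (x \in img M V) = (x *m M' \in V).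
Proof.
apply/memv_imgP/idP => [[y yV ->]|xV].
  by rewrite lfunE /= MK.
by exists (x *m M') => //; rewrite lfunE /= M'K.
Qed.

Lemma dim_img V : \dim (img M V) = \dim V.
Proof.
apply: limg_dim_eq; apply/eqP; rewrite -subv0; apply/subvP => x.
rewrite memv_cap memv_ker lfunE /= => /andP[_ /eqP x0].
by rewrite memv0 -[x]MK x0 mul0mx.
Qed.

Lemma span_img (S S' : vec -> Prop) V :
  (forall x, S' x <-> S (x *m M')) -> is_span S V -> is_span S' (img M V).
Proof.
move=> SS [sub mini]; split.
  by move=> x /SS Sx; rewrite mem_img; apply: sub.
move=> U SU.
have : (V <= img M' U)%VS.
  apply: mini => x Sx.
  apply/memv_imgP; exists (x *m M); last by rewrite lfunE /= MK.
  by apply: SU; apply/SS; rewrite MK.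
move=> /subvP VU; apply/subvP => x; rewrite mem_img => /VU /memv_imgP [y yU].
rewrite lfunE /= => E; by rewrite -(M'K x) E M'K.
Qed.

End Img.


Section Inv.
Variables (R : realType) (n : nat).
Notation vec := 'rV[R]_n.
Variable Phi : seq vec.
Hypothesis nz : 0 \notin Phi.
Hypothesis hrefl : forall a b, a \in Phi -> b \in Phi -> b *m refl a \in Phi.

Lemma conv_map (w : 'M[R]_n) x : (forall b, b \in Phi -> b *m w \in Phi) ->
  conv Phi x -> conv Phi (x *m w).
Proof.
move=> wP [c [c0 c1 ->]].
pose sg (i : 'I_(size Phi)) : 'I_(size Phi) := insubd i (index (Phi`_i *m w) Phi).
have sgE i : Phi`_(sg i) = Phi`_i *m w.
  have mP : Phi`_i *m w \in Phi by apply: wP; rewrite mem_nth.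
  by rewrite /sg val_insubd index_mem mP nth_index.
have inner i : \sum_j (sg i == j)%:R * c i = c i.
  rewrite (bigD1 (sg i)) //= eqxx mul1r big1 ?addr0 // => j.
  by rewrite eq_sym => /negbTE ->; rewrite mul0r.
exists (fun j => \sum_i (sg i == j)%:R * c i); split.
- by move=> j; apply: sumr_ge0 => i _; apply: mulr_ge0 => //; rewrite ler0n.
- rewrite exchange_big /= -[RHS]c1; apply: eq_bigr => i _; exact: inner.
- rewrite mulmx_suml.
  under [RHS]eq_bigr do rewrite scaler_suml.
  rewrite exchange_big /=; apply: eq_bigr => i _.
  rewrite -scalemxAl -sgE (bigD1 (sg i)) //= eqxx mul1r big1 ?addr0 // => j.
  by rewrite eq_sym => /negbTE ->; rewrite mul0r scale0r.
Qed.

Lemma HPhi_img w V : in_weyl Phi w -> in_HPhi Phi V ->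
  exists w', [/\ in_weyl Phi w', (forall x : vec, x *m w *m w' = x),
    (forall x : vec, x *m w' *m w = x) & in_HPhi Phi (img w V)].
Proof.
move=> wW [F [[a [c [Fle FE]]] [[x0 Fx0] [D [Dspan Ddim]]] Vspan]].
have [w' [w'W wK w'K]] := weyl_inv nz wW.
exists w'; split => //.
have convE y : conv Phi (y *m w') <-> conv Phi y.
  split => [/(conv_map (fun b => weyl_root hrefl wW (b:=b)))|].
    by rewrite w'K.
  exact: conv_map (fun b => weyl_root hrefl w'W (b:=b)).
have dotE y : dot a (y *m w') = dot (a *m w) y.
  by rewrite -(weyl_dot nz (a *m w) y w'W) wK.
exists (fun x => F (x *m w')); split.
- exists (a *m w), c; split.
    by move=> y /convE Cy; rewrite -dotE; apply: Fle.
  move=> x; rewrite FE convE dotE; by [].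
- split; first by exists (x0 *m w); rewrite wK.
  exists (img w D); split; last by rewrite (dim_img wK).
  apply: (span_img wK w'K _ Dspan) => v; split.
    case=> x [y [Fx Fy ->]]; exists (x *m w'), (y *m w'); split => //.
    by rewrite mulmxBl.
  case=> x [y [Fx Fy E]]; exists (x *m w), (y *m w); split; rewrite ?wK //.
  by rewrite -mulmxBl -E w'K.
- by apply: (span_img wK w'K _ Vspan).
Qed.

End Inv.


Section Perp.
Variables (R : realType) (n : nat).
Notation vec := 'rV[R]_n.

Definition perpv (v : vec) : {vspace vec} := lker (linfun (mulmxr v^T)).

Lemma mx11_eq0 (A : 'M[R]_1) : (A == 0) = (A 0 0 == 0).
Proof.
apply/eqP/eqP => [->|H]; first by rewrite mxE.
by rewrite [A]mx11_scalar H; apply/matrixP => i j; rewrite !mxE; case: (_ == _).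
Qed.

Lemma mem_perpv v x : (x \in perpv v) = (dot x v == 0).
Proof. by rewrite memv_ker lfunE /= mx11_eq0. Qed.

Lemma dim_full : \dim (fullv : {vspace vec}) = n.
Proof. by rewrite dimvf /dim /= mul1n. Qed.

Lemma dim_perpv v : v != 0 -> \dim (perpv v) = n.-1.
Proof.
move=> nz.
have := limg_ker_dim (linfun (mulmxr v^T : vec -> 'M_1)) fullv.
rewrite capfv dim_full -/(perpv v).
set L := (_ @: _)%VS.
have : \dim L = 1%N.
  apply/eqP; rewrite eqn_leq; apply/andP; split.
    by have := dimvS (subvf L); rewrite dimvf /dim /= muln1.
  rewrite lt0n dimv_eq0; apply/eqP => L0.
  have : v *m v^T \in L by rewrite /L -[v *m v^T](lfunE (mulmxr v^T)) memv_img ?memvf.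
  rewrite L0 memv0 mx11_eq0 -/(dot v v) dot_eq0 => /eqP v0.
  by move: nz; rewrite v0 eqxx.
by move=> -> /(congr1 predn); rewrite addn1.
Qed.

Lemma dot_span0 (X : seq vec) v y : y \in <<X>>%VS ->
  (forall x, x \in X -> dot x v = 0) -> dot y v = 0.
Proof.
move=> yX H; have : (<<X>> <= perpv v)%VS.
  by apply/span_subvP => x /H xv; rewrite mem_perpv xv.
by move/subvP/(_ y yX); rewrite mem_perpv => /eqP.
Qed.

End Perp.

Section Face.
Variables (R : realType) (n : nat).
Notation vec := 'rV[R]_n.
Variable Phi : seq vec.
Hypothesis n2 : (2 <= n)%N.
Hypothesis nz : 0 \notin Phi.
Hypothesis hspan : forall v : vec, v \in <<Phi>>%VS.
Hypothesis hrefl : forall a b, a \in Phi -> b \in Phi -> b *m refl a \in Phi.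

Lemma span_full : <<Phi>>%VS = fullv.
Proof. by apply/eqP; rewrite eqEsubv subvf; apply/subvP => v _; apply: hspan. Qed.

Lemma size_Phi : (n <= size Phi)%N.
Proof. by rewrite (leq_trans _ (dim_span Phi)) // span_full dim_full. Qed.

Lemma neg_root b : b \in Phi -> - b \in Phi.
Proof. by move=> bP; rewrite -(refl_self (root_nz nz bP)); apply: hrefl. Qed.

Lemma sum_ind m (i0 : 'I_m) : \sum_i (i == i0)%:R = 1 :> R.
Proof. by rewrite (bigD1 i0) //= eqxx big1 ?addr0 // => i /negbTE ->. Qed.

Lemma sum_indZ m (i0 : 'I_m) (f : 'I_m -> vec) : \sum_i (i == i0)%:R *: f i = f i0.
Proof.
rewrite (bigD1 i0) //= eqxx scale1r big1 ?addr0 // => i /negbTE ->.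
by rewrite scale0r.
Qed.

Lemma conv_nth (i0 : 'I_(size Phi)) : conv Phi Phi`_i0.
Proof.
exists (fun i => (i == i0)%:R); split.
- by move=> i; rewrite ler0n.
- by rewrite (bigD1 i0) //= eqxx big1 ?addr0 // => i /negbTE ->.
- rewrite (bigD1 i0) //= eqxx scale1r big1 ?addr0 // => i /negbTE ->.
  by rewrite scale0r.
Qed.

Lemma root_conv b : b \in Phi -> conv Phi b.
Proof.
move=> bP; have := conv_nth (Ordinal (etrans (index_mem b Phi) bP)).
by rewrite /= nth_index.
Qed.

Lemma orth_all0 y : (forall b, b \in Phi -> dot b y = 0) -> y = 0.
Proof.
move=> H; apply/eqP; rewrite -(dot_eq0 y); apply/eqP.
exact: dot_span0 (hspan y) H.
Qed.

Lemma zero_conv : conv Phi 0.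
Proof.
have sz : (0 < size Phi)%N by apply: leq_trans size_Phi; apply: leq_trans n2.
pose i1 : 'I_(size Phi) := Ordinal sz.
have m1 : - Phi`_i1 \in Phi by apply: neg_root; rewrite mem_nth.
pose i2 : 'I_(size Phi) := Ordinal (etrans (index_mem _ Phi) m1).
exists (fun i => ((i == i1)%:R + (i == i2)%:R) / 2); split.
- by move=> i; apply: divr_ge0; rewrite ?addr_ge0 ?ler0n.
- by rewrite -mulr_suml big_split /= !sum_ind; field.
- under eq_bigr do rewrite mulrC -scalerA scalerDl.
  rewrite -scaler_sumr big_split /= !sum_indZ /= nth_index //.
  by rewrite addrN scaler0.
Qed.

Lemma face_facts V : in_HPhi Phi V -> exists (a : vec) (c : R),
  [/\ 0 < c, (forall b, b \in Phi -> dot a b <= c),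
      (forall b, b \in Phi -> dot a b = c -> b \in V),
      V = <<[seq b <- Phi | dot a b == c]>>%VS & \dim V = n.-1].
Proof.
move=> [F [[a [c [Fle FE]]] [[x0 Fx0] [D [[Dsub Dmin] Ddim]]] [Vsub Vmin]]].
have ale b : b \in Phi -> dot a b <= c by move=> bP; apply: Fle; apply: root_conv.
have inV b : b \in Phi -> dot a b = c -> b \in V.
  by move=> bP abc; apply: Vsub; apply/FE; split => //; apply: root_conv.
have ax0 : dot a x0 = c by case: (FE x0) => [/(_ Fx0) []].
have cpos : 0 < c.
  rewrite ltNge; apply/negP => cle.
  have a0 b : b \in Phi -> dot b a = 0.
    move=> bP; rewrite dotC; apply/eqP; rewrite eq_le (le_trans (ale b bP) cle) /=.
    by rewrite -oppr_le0 -dotNr (le_trans _ cle) // ale // neg_root.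
  have a00 : a = 0 by apply: orth_all0.
  have c0 : c = 0 by rewrite -ax0 a00 dot0l.
  have : (fullv <= D)%VS.
    rewrite -span_full; apply/span_subvP => b bP; apply: Dsub.
    exists b, 0; rewrite subr0; split => //; apply/FE.
      by split; [apply: root_conv | rewrite a00 dot0l c0].
    by split; [apply: zero_conv | rewrite a00 dot0l c0].
  move/dimvS; rewrite dim_full Ddim => H.
  by move: H n2; clear; lia.
have DV : (D <= V)%VS.
  by apply: Dmin => v [x [y [Fx Fy ->]]]; apply: memvB; apply: Vsub.
have Dperp : (D <= perpv a)%VS.
  apply: Dmin => v [x [y [Fx Fy ->]]]; rewrite mem_perpv dotC dotBr.
  by case: (FE x) => [/(_ Fx) [_ ->]] _; case: (FE y) => [/(_ Fy) [_ ->]] _; rewrite subrr.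
have x0D : x0 \notin D.
  apply/negP => /(subvP Dperp); rewrite mem_perpv dotC ax0 => /eqP c0.
  by move: cpos; rewrite c0 ltxx.
have VE : V = (D + <[x0]>)%VS.
  apply/eqP; rewrite eqEsubv; apply/andP; split.
    apply: Vmin => x Fx; rewrite -(subrK x0 x); apply: memv_add; last exact: memv_line.
    by apply: Dsub; exists x, x0.
  by rewrite subv_add DV -memvE Vsub.
exists a, c; split => //.
- apply/eqP; rewrite eqEsubv; apply/andP; split.
    apply: Vmin => x /FE [[cx [cx0 cx1 ->]] ax].
    have term i : cx i = 0 \/ dot a Phi`_i = c.
      have H : \sum_i cx i * (c - dot a Phi`_i) = 0.
        rewrite -ax dot_sumr.
        under eq_bigr do rewrite mulrBr.
        rewrite sumrB -mulr_suml cx1 mul1r.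
        by under eq_bigr do rewrite dotZr; rewrite subrr.
      have nn j : 0 <= cx j * (c - dot a Phi`_j).
        by rewrite mulr_ge0 // subr_ge0 ale // mem_nth.
      have := psumr_eq0P (fun j _ => nn j) H (i := i) isT; move/eqP.
      by rewrite mulf_eq0 subr_eq0 => /orP [/eqP|/eqP]; [left|right].
    apply: memv_suml => i _; case: (term i) => [->|E]; first by rewrite scale0r mem0v.
    by apply: memvZ; apply: memv_span; rewrite mem_filter E eqxx mem_nth.
  by apply/span_subvP => b; rewrite mem_filter => /andP [/eqP E bP]; apply: inV.
- rewrite VE dimv_disjoint_sum ?Ddim ?dim_vline.
    have -> : (x0 != 0) by apply: contraNneq x0D => ->; rewrite mem0v.
    by rewrite addn1 -subSn // subSS subn1.
  apply/eqP; rewrite -subv0; apply/subvP => y; rewrite memv_cap => /andP [yD /vlineP [k yk]].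
  move: yD; rewrite yk => kD; rewrite memv0.
  have : k *: x0 \in perpv a by apply: (subvP Dperp).
  rewrite mem_perpv dotZl dotC ax0 mulf_eq0 => /orP [/eqP ->|/eqP c0]; first by rewrite scale0r.
  by move: cpos; rewrite c0 ltxx.
Qed.

End Face.


Section Base.
Variables (R : realType) (n : nat).
Notation vec := 'rV[R]_n.
Variable Phi : seq vec.
Variables (Pi omega : 'I_n -> vec).
Hypothesis nz : 0 \notin Phi.
Hypothesis hspan : forall v : vec, v \in <<Phi>>%VS.
Hypothesis hrefl : forall a b, a \in Phi -> b \in Phi -> b *m refl a \in Phi.
Hypothesis hbase : is_base Phi Pi.
Hypothesis hcow : is_coweights Pi omega.

Lemma sum_indr m (j : 'I_m) (f : 'I_m -> R) : \sum_i f i * (i == j)%:R = f j.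
Proof.
rewrite (bigD1 j) //= eqxx mulr1 big1 ?addr0 // => i /negbTE ->.
by rewrite mulr0.
Qed.

Lemma Pi_root i : Pi i \in Phi.
Proof. by case: hbase. Qed.

Lemma root_coef b : b \in Phi -> exists c : 'I_n -> int,
  b = \sum_i (c i)%:~R *: Pi i /\ ((forall i, 0 <= c i) \/ (forall i, c i <= 0)).
Proof. by case: hbase => _ _; apply. Qed.

Lemma orth_Pi0 y : (forall i, dot (Pi i) y = 0) -> y = 0.
Proof.
move=> H; apply: (orth_all0 hspan) => b /root_coef [c [-> _]].
by rewrite dot_suml big1 // => i _; rewrite dotZl H mulr0.
Qed.

Lemma expand x : x = \sum_i dot (Pi i) x *: omega i.
Proof.
apply/eqP; rewrite -subr_eq0; apply/eqP; apply: orth_Pi0 => j.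
rewrite dotBr dot_sumr.
under eq_bigr do rewrite dotZr hcow.
by rewrite sum_indr subrr.
Qed.

Lemma coef_omega b (c : 'I_n -> int) h : b = \sum_i (c i)%:~R *: Pi i ->
  dot b (omega h) = (c h)%:~R.
Proof.
move=> ->; rewrite dot_suml.
under eq_bigr do rewrite dotZl hcow eq_sym.
by rewrite sum_indr.
Qed.

Lemma par_back h b : b \in Phi -> dot b (omega h) = 0 -> b \in parabolic Phi Pi h.
Proof.
move=> bP; have [c [bE _]] := root_coef bP.
rewrite (coef_omega h bE) => ch.
rewrite /parabolic mem_filter bP andbT bE; apply: memv_suml => i _.
have [->|ih] := eqVneq i h; first by rewrite ch scale0r mem0v.
by apply: memvZ; apply: memv_span; apply: map_f; rewrite mem_filter ih mem_enum.
Qed.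

Lemma par_fwd h b : b \in parabolic Phi Pi h -> dot b (omega h) = 0.
Proof.
rewrite /parabolic mem_filter => /andP [bS _]; apply: (dot_span0 bS) => x.
by case/mapP => j; rewrite mem_filter => /andP [jh _] ->; rewrite hcow eq_sym (negbTE jh).
Qed.

Lemma par_root h b : b \in parabolic Phi Pi h -> b \in Phi.
Proof. by rewrite /parabolic mem_filter => /andP []. Qed.

Definition rho := \sum_i omega i.

Lemma dot_rho i : dot (Pi i) rho = 1.
Proof.
rewrite /rho dot_sumr (bigD1 i) //= hcow eqxx big1 ?addr0 // => j ji.
by rewrite hcow (negbTE ji).
Qed.

Lemma dominant u : exists w, in_weyl Phi w /\ forall i, 0 <= dot (Pi i) (u *m w).
Proof.
pose m := size Phi.
pose X := in_tuple Phi.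
have uE : u = \sum_j coord X j u *: Phi`_j by apply: coord_span; apply: hspan.
pose G (g : {ffun 'I_m -> 'I_m}) := \sum_j coord X j u *: Phi`_(g j).
pose sg (w : 'M[R]_n) := [ffun j : 'I_m => insubd j (index (Phi`_j *m w) Phi)].
have sgE w : in_weyl Phi w -> u *m w = G (sg w).
  move=> wW; rewrite {1}uE mulmx_suml /G; apply: eq_bigr => j _.
  rewrite -scalemxAl ffunE; congr (_ *: _).
  have mP : Phi`_j *m w \in Phi by apply: (weyl_root hrefl wW); rewrite mem_nth.
  by rewrite val_insubd index_mem mP nth_index.
pose f (y : vec) := dot y rho.
pose S w := [set g | f (u *m w) < f (G g)].
suff main : forall N w, in_weyl Phi w -> (#|S w| < N)%N ->
   exists w, in_weyl Phi w /\ forall i, 0 <= dot (Pi i) (u *m w).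
  by apply: (main (#|S 1%:M|).+1 1%:M (weyl1 _)).
elim=> [//|N IH] w wW SN.
case: (boolP [forall i, 0 <= dot (Pi i) (u *m w)]) => [/forallP H|].
  by exists w.
rewrite negb_forall => /existsP [i]; rewrite -ltNge => neg.
pose w2 := w *m refl (Pi i).
have w2W : in_weyl Phi w2 by apply: weyl_refl => //; apply: Pi_root.
apply: (IH w2 w2W).
have Pnz : Pi i != 0 by apply: (root_nz nz); apply: Pi_root.
have kneg : 2 * dot (u *m w) (Pi i) / dot (Pi i) (Pi i) < 0.
  by rewrite pmulr_llt0 ?invr_gt0 ?dot_gt0 // pmulr_rlt0 // dotC.
have incr : f (u *m w) < f (u *m w2).
  rewrite /f /w2 mulmxA reflE dotBl dotZl dot_rho mulr1.
  move: kneg; set k := _ / _; lra.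
have sub : S w2 \proper S w.
  apply/properP; split.
    by apply/subsetP => g; rewrite !inE => H; exact: lt_trans incr H.
  by exists (sg w2); rewrite !inE -sgE // ltxx.
by have := proper_card sub; move: SN; clear; lia.
Qed.

End Base.


Section Normal.
Variables (R : realType) (n : nat).
Notation vec := 'rV[R]_n.

Lemma normal_exists (V : {vspace vec}) : (0 < n)%N -> \dim V = n.-1 ->
  exists u : vec, u != 0 /\ V = perpv u.
Proof.
move=> n0 dV.
pose d := \dim V.
pose B : 'M[R]_(n, d) := \matrix_(j, i) (vbasis V)`_i 0 j.
pose phi := linfun (mulmxr B : vec -> 'rV_d).
have := limg_ker_dim phi fullv; rewrite capfv dim_full.
have : (\dim (phi @: fullv) <= d)%N.
  by have := dimvS (subvf (phi @: fullv)); rewrite dimvf /dim /= mul1n.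
move=> le1 E.
have d1 : d = n.-1 by []. 
have kpos : (0 < \dim (lker phi))%N by lia.
set u := vpick (lker phi).
have unz : u != 0 by rewrite vpick0 -dimv_eq0 -lt0n.
have uB : u *m B = 0 by have := memv_pick (lker phi); rewrite memv_ker lfunE => /eqP.
exists u; split => //.
have sub : (V <= perpv u)%VS.
  apply/subvP => v vV; rewrite mem_perpv (coord_vbasis vV) dot_suml.
  rewrite big1 // => i _; rewrite dotZl.
  have : (u *m B) 0 i = 0 by rewrite uB mxE.
  rewrite !mxE dotE => H.
  transitivity (coord (vbasis V) i v * \sum_j u 0 j * B j i); last by rewrite H mulr0.
  by congr (_ * _); apply: eq_bigr => j _; rewrite mxE mulrC.
by apply/eqP; rewrite eqEdim sub (dim_perpv unz) dV leqnn.
Qed.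

End Normal.


Section Fwd.
Variables (R : realType) (n : nat).
Notation vec := 'rV[R]_n.
Variable Phi : seq vec.
Variables (Pi omega : 'I_n -> vec).
Hypothesis n2 : (2 <= n)%N.
Hypothesis nz : 0 \notin Phi.
Hypothesis hspan : forall v : vec, v \in <<Phi>>%VS.
Hypothesis hrefl : forall a b, a \in Phi -> b \in Phi -> b *m refl a \in Phi.
Hypothesis hbase : is_base Phi Pi.
Hypothesis hcow : is_coweights Pi omega.

Lemma supp_dom (x : vec) b : (forall i, 0 <= dot (Pi i) x) -> b \in Phi ->
  dot b x = 0 -> b \in <<[seq Pi i | i <- enum [set i | dot (Pi i) x == 0%R]]>>%VS.
Proof.
move=> dom bP bx; have [c [bE sgn]] := root_coef hbase bP.
have term i : (c i)%:~R * dot (Pi i) x = 0 :> R.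
  have H : \sum_i (c i)%:~R * dot (Pi i) x = 0 :> R.
    transitivity (dot b x); last exact: bx.
    by rewrite bE dot_suml; apply: eq_bigr => j _; rewrite dotZl.
  case: sgn => sg.
    have nn j : 0 <= (c j)%:~R * dot (Pi j) x :> R by rewrite mulr_ge0 ?ler0z.
    exact: (psumr_eq0P (fun j _ => nn j) H (i := i) isT).
  have nn j : 0 <= - ((c j)%:~R * dot (Pi j) x) :> R.
    by rewrite -mulNr mulr_ge0 // oppr_ge0 lerz0.
  have H' : \sum_i - ((c i)%:~R * dot (Pi i) x) = 0 :> R by rewrite sumrN H oppr0.
  by apply/eqP; rewrite -oppr_eq0; apply/eqP; exact: (psumr_eq0P (fun j _ => nn j) H' (i := i) isT).
rewrite bE; apply: memv_suml => i _.
move: (term i) => /eqP; rewrite mulf_eq0 => /orP [/eqP ->|zi].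
  by rewrite scale0r mem0v.
by apply: memvZ; apply: memv_span; apply: map_f; rewrite mem_enum inE.
Qed.

Definition Hset : {set 'I_n} :=
  [set k | boolp.asbool (exists V0, in_HPhi Phi V0 /\ is_perp V0 (omega k))].

Lemma fwd V : in_HPhi Phi V -> exists (w : 'M[R]_n) (k : 'I_n),
  [/\ in_weyl Phi w, k \in Hset & is_perp V (omega k *m w)].
Proof.
move=> HV.
have [a [c [cpos ale inV VE Vdim]]] := face_facts n2 nz hspan hrefl HV.
have [u [unz Vu]] := normal_exists (ltnW n2) Vdim.
have [w [wW dom]] := dominant nz hspan hrefl hbase hcow u.
have [w' [w'W wK w'K HVw]] := HPhi_img nz hrefl wW HV.
set x := u *m w.
set Z := [set i | dot (Pi i) x == 0].
have xnz : x != 0.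
  by rewrite -dot_eq0 /x (weyl_dot nz _ _ wW) dot_eq0.
have sub : (img w V <= <<[seq Pi i | i <- enum Z]>>)%VS.
  rewrite /img VE limg_span; apply/span_subvP => y /mapP [b].
  rewrite mem_filter => /andP [/eqP abc bP] ->; rewrite lfunE /=.
  apply: supp_dom => //.
  by have := weyl_root hrefl wW bP.
  rewrite (weyl_dot nz _ _ wW); apply/eqP; rewrite -mem_perpv -Vu.
  exact: inV.
have dimZ : (n.-1 <= #|Z|)%N.
  rewrite -Vdim -(dim_img wK) cardE -(size_map Pi).
  exact: leq_trans (dimvS sub) (dim_span _).
have [k ck] : exists k, dot (Pi k) x != 0.
  case: (boolP [exists k, dot (Pi k) x != 0]) => [/existsP //|].
  rewrite negb_exists => /forallP H; case/negP: xnz; apply/eqP.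
  by apply: (orth_Pi0 hspan hbase) => i; apply/eqP; move: (H i); rewrite negbK.
have oth j : j != k -> dot (Pi j) x = 0.
  move=> jk; apply/eqP; apply/negPn/negP => cj.
  have : Z \subset ~: [set k; j].
    apply/subsetP => i; rewrite !inE => /eqP zi; apply/negP => /orP [] /eqP ei.
      by move: ck; rewrite -ei zi eqxx.
    by move: cj; rewrite -ei zi eqxx.
  move/subset_leq_card; rewrite [#|~: _|]cardsCs setCK cards2 card_ord eq_sym jk.
  by move: dimZ n2; clear; lia.
have xE : x = dot (Pi k) x *: omega k.
  rewrite {1}(expand hspan hbase hcow x) (bigD1 k) //= big1 ?addr0 // => j jk.
  by rewrite oth // scale0r.
exists w', k; split => //.
  rewrite inE; apply/boolp.asboolP; exists (img w V); split => // y.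
  rewrite (mem_img wK w'K) Vu mem_perpv -(weyl_dot nz _ _ wW) w'K -/x xE dotZr.
  by rewrite mulf_eq0 (negbTE ck).
move=> y; rewrite Vu mem_perpv -[u]wK -/x xE -scalemxAl dotZr.
by rewrite mulf_eq0 (negbTE ck).
Qed.

End Fwd.


Section NN.
Variables (R : realType) (n : nat).
Notation vec := 'rV[R]_n.
Variable Phi : seq vec.
Hypothesis nz : 0 \notin Phi.
Variable FR : seq vec.

Definition NN (Q : pred vec) (x : vec) : Prop :=
  exists2 f, f \in FR & Q f && (dot x f != 0).

Lemma notNN Q y f : ~ NN Q y -> f \in FR -> Q f -> dot y f = 0.
Proof.
move=> H fF Qf; apply/eqP; apply/negPn/negP => yf; apply: H.
by exists f => //; rewrite Qf yf.
Qed.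

Lemma dot_reflE (x y v : vec) : dot (x *m refl y) v = dot x v - 2 * dot x y / dot y y * dot y v.
Proof. by rewrite reflE dotBl dotZl. Qed.

Lemma mixNN Q1 Q2 x y : y \in Phi -> dot x y != 0 ->
  NN Q1 x -> ~ NN Q1 y -> NN Q2 y -> ~ NN Q2 x ->
  NN Q1 (x *m refl y) /\ NN Q2 (x *m refl y).
Proof.
move=> yP xy [f fF /andP [Qf xf]] n1y [g gF /andP [Qg yg]] n2x.
have ynz := root_nz nz yP.
have yy : dot y y != 0 by rewrite dot_eq0.
split.
  exists f => //; rewrite Qf dot_reflE (notNN n1y fF Qf) mulr0 subr0 //.
exists g => //; rewrite Qg dot_reflE (notNN n2x gF Qg) sub0r oppr_eq0.
by rewrite !mulf_neq0 ?invr_eq0 // pnatr_eq0.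
Qed.

Lemma reflNN Q x y : x \in Phi -> dot y x != 0 -> NN Q x -> ~ NN Q y ->
  NN Q (y *m refl x).
Proof.
move=> xP yx [f fF /andP [Qf xf]] ny.
have xnz := root_nz nz xP.
have xx : dot x x != 0 by rewrite dot_eq0.
exists f => //; rewrite Qf dot_reflE (notNN ny fF Qf) sub0r oppr_eq0.
by rewrite !mulf_neq0 ?invr_eq0 // pnatr_eq0.
Qed.

End NN.

Section Irr.
Variables (R : realType) (n : nat).
Notation vec := 'rV[R]_n.
Variable Phi : seq vec.
Variables (Pi omega : 'I_n -> vec).
Hypothesis n2 : (2 <= n)%N.
Hypothesis nz : 0 \notin Phi.
Hypothesis hspan : forall v : vec, v \in <<Phi>>%VS.
Hypothesis hrefl : forall a b, a \in Phi -> b \in Phi -> b *m refl a \in Phi.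
Hypothesis hcryst : forall a b, a \in Phi -> b \in Phi ->
         exists z : int, 2 * dot b a / dot a a = z%:~R.
Hypothesis hirr : irreducible Phi.
Hypothesis hbase : is_base Phi Pi.
Hypothesis hcow : is_coweights Pi omega.

Lemma irr_part h : h \in Hset Phi omega -> irreducible (parabolic Phi Pi h).
Proof.
rewrite inE => /boolp.asboolP [V0 [HV0 perp0]].
have [a [c [cpos ale inV VE _]]] := face_facts n2 nz hspan hrefl HV0.
set FR := [seq b <- Phi | dot a b == c].
have FRP f : f \in FR -> f \in Phi by rewrite mem_filter => /andP [].
have FRa f : f \in FR -> dot a f = c by rewrite mem_filter => /andP [/eqP].
have FRV f : f \in FR -> dot f (omega h) = 0.
  by move=> fF; apply/eqP; rewrite -perp0; apply: inV; [apply: FRP | apply: FRa].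
have FRpar f : f \in FR -> f \in parabolic Phi Pi h.
  by move=> fF; apply: par_back => //; [apply: FRP | apply: FRV].
have span0 y x : (forall f, f \in FR -> dot f y = 0) -> dot x (omega h) = 0 ->
    dot x y = 0.
  move=> H xh; apply: (dot_span0 (X := FR)) => //.
  by rewrite -VE perp0 xh.
have rnz x : x \in Phi -> dot x x != 0 by move=> xP; rewrite dot_eq0 (root_nz nz).
move=> P [p pPar Pp] [q qPar nPq].
apply: NNPP => Hno.
have orth x y : x \in parabolic Phi Pi h -> y \in parabolic Phi Pi h ->
    P x -> ~~ P y -> dot x y = 0.
  move=> xp yp Px nPy; apply/eqP; apply/negPn/negP => xy; apply: Hno.
  by exists x, y; split.
have [f1 f1F Pf1] : exists2 f, f \in FR & P f.
  apply: NNPP => H.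
  have : p = 0.
    apply/eqP; rewrite -(dot_eq0 p); apply/eqP; apply: span0; last exact: par_fwd pPar.
    move=> f fF; rewrite dotC; apply: orth => //; first exact: FRpar.
    by apply/negP => Pf; apply: H; exists f.
  by move=> p0; move: (par_root pPar); rewrite p0 (negbTE nz).
have [f2 f2F nPf2] : exists2 f, f \in FR & ~~ P f.
  apply: NNPP => H.
  have : q = 0.
    apply/eqP; rewrite -(dot_eq0 q); apply/eqP; apply: span0; last exact: par_fwd qPar.
    move=> f fF; apply: orth => //; first exact: FRpar.
    by apply/negPn/negP => Pf; apply: H; exists f.
  by move=> q0; move: (par_root qPar); rewrite q0 (negbTE nz).
have f12 : dot f1 f2 = 0 by apply: orth => //; apply: FRpar.
have [g gP [[e1 e1F /andP [Pe1 ge1]] [e2 e2F /andP [nPe2 ge2]]]] :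
    exists2 g, g \in Phi & NN FR P g /\ NN FR (predC P) g.
  apply: NNPP => Hnone.
  have none x : x \in Phi -> NN FR P x -> NN FR (predC P) x -> False.
    by move=> xP a1 a2; apply: Hnone; exists x.
  have Orth x y : x \in Phi -> y \in Phi -> NN FR P x -> NN FR (predC P) y ->
      dot x y = 0.
    move=> xP yP n1x n2y; apply/eqP; apply/negPn/negP => xy.
    have [a1 a2] := mixNN nz yP xy n1x (fun H => none y yP H n2y) n2y
      (fun H => none x xP n1x H).
    exact: none (hrefl yP xP) a1 a2.
  have yform y : (forall f, f \in FR -> dot y f = 0) ->
      y = dot (Pi h) y *: omega h.
    move=> H; rewrite {1}(expand hspan hbase hcow y) (bigD1 h) //= big1 ?addr0 //.
    move=> j jh; rewrite span0 ?scale0r //.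
      by move=> f fF; rewrite dotC H.
    by rewrite hcow eq_sym (negbTE jh).
  have orthFR y : ~ NN FR P y -> ~ NN FR (predC P) y ->
      forall f, f \in FR -> dot y f = 0.
    move=> h1 h2 f fF; case: (boolP (P f)) => Pf.
      exact: notNN h1 fF Pf.
    exact: (notNN (Q := predC P) h2 fF Pf).
  have Q1a : exists2 a, a \in Phi & boolp.asbool (NN FR P a).
    exists f1; first exact: FRP.
    apply/boolp.asboolP; exists f1 => //; rewrite Pf1 /=; exact: rnz (FRP _ f1F).
  have Q1b : exists2 a, a \in Phi & ~~ boolp.asbool (NN FR P a).
    exists f2; first exact: FRP.
    apply/boolp.asboolPn => [[f fF /andP [Pf ff]]]; move: ff.
    by rewrite dotC (orth f f2 (FRpar _ fF) (FRpar _ f2F) Pf nPf2) eqxx.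
  have := hirr Q1a Q1b.
  move=> [x1 [y1 [x1P y1P /boolp.asboolP n1x1 /boolp.asboolPn nn1y1 xy1]]].
  have nn2y1 : ~ NN FR (predC P) y1.
    move=> n2y1; have [a1 a2] := mixNN nz y1P xy1 n1x1 nn1y1 n2y1
      (fun H => none x1 x1P n1x1 H).
    exact: none (hrefl y1P x1P) a1 a2.
  have Q2a : exists2 a, a \in Phi & boolp.asbool (NN FR (predC P) a).
    exists f2; first exact: FRP.
    apply/boolp.asboolP; exists f2 => //; rewrite /= nPf2 /=; exact: rnz (FRP _ f2F).
  have Q2b : exists2 a, a \in Phi & ~~ boolp.asbool (NN FR (predC P) a).
    exists f1; first exact: FRP.
    apply/boolp.asboolPn => [[f fF /andP [nPf ff]]]; move: ff.
    by rewrite (orth f1 f (FRpar _ f1F) (FRpar _ fF) Pf1 nPf) eqxx.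
  have := hirr Q2a Q2b.
  move=> [x2 [y2 [x2P y2P /boolp.asboolP n2x2 /boolp.asboolPn nn2y2 xy2]]].
  have nn1y2 : ~ NN FR P y2.
    move=> n1y2; have [a1 a2] := mixNN nz y2P xy2 n2x2 nn2y2 n1y2
      (fun H => none x2 x2P H n2x2).
    exact: none (hrefl y2P x2P) a2 a1.
  have y1E := yform y1 (orthFR y1 nn1y1 nn2y1).
  have y2E := yform y2 (orthFR y2 nn1y2 nn2y2).
  have t1 : dot (Pi h) y1 != 0.
    by apply: contraNneq (root_nz nz y1P) => t0; rewrite y1E t0 scale0r.
  have x2y1 : dot x2 y1 != 0.
    move: xy2; rewrite {1}y2E {1}y1E !dotZr !mulf_eq0 !negb_or => /andP [_ H].
    by rewrite t1 H.
  have zP : y1 *m refl x1 \in Phi by apply: hrefl.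
  have n1z : NN FR P (y1 *m refl x1).
    by apply: (reflNN nz x1P) => //; rewrite dotC.
  have := Orth _ _ zP x2P n1z n2x2.
  rewrite dot_reflE (Orth _ _ x1P x2P n1x1 n2x2) mulr0 subr0 dotC => /eqP.
  by rewrite (negbTE x2y1).
have e12 : dot e1 e2 = 0 by apply: orth => //; apply: FRpar.
have gh : dot g (omega h) != 0.
  apply/eqP => gh0; have gpar := par_back hbase hcow gP gh0.
  case: (boolP (P g)) => Pg.
    by move: ge2; rewrite (orth g e2 gpar (FRpar e2 e2F) Pg nPe2) eqxx.
  by move: ge1; rewrite dotC (orth e1 g (FRpar e1 e1F) gpar Pe1 Pg) eqxx.
have e1nz : dot e1 e1 != 0 by apply: rnz; apply: FRP.
have e2nz : dot e2 e2 != 0 by apply: rnz; apply: FRP.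
have [g1 [g1P g1e1 g1e2 g1h]] : exists g1, [/\ g1 \in Phi, 0 < dot g1 e1,
    dot g1 e2 != 0 & dot g1 (omega h) != 0].
  case: (ltrgtP (dot g e1) 0) => [neg|pos|z]; last by move: ge1; rewrite z eqxx.
    exists (g *m refl e1); split.
    - by apply: hrefl => //; apply: FRP.
    - rewrite dot_reflE -mulrA mulVf // mulr1; lra.
    - by rewrite dot_reflE e12 mulr0 subr0.
    - by rewrite dot_reflE (FRV e1 e1F) mulr0 subr0.
  by exists g.
have [g2 [g2P g2e1 g2e2 g2h]] : exists g2, [/\ g2 \in Phi, 0 < dot g2 e1,
    0 < dot g2 e2 & dot g2 (omega h) != 0].
  case: (ltrgtP (dot g1 e2) 0) => [neg|pos|z]; last by move: g1e2; rewrite z eqxx.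
    exists (g1 *m refl e2); split.
    - by apply: hrefl => //; apply: FRP.
    - by rewrite dot_reflE (dotC e2 e1) e12 mulr0 subr0.
    - rewrite dot_reflE -mulrA mulVf // mulr1; lra.
    - by rewrite dot_reflE (FRV e2 e2F) mulr0 subr0.
  by exists g1.
have e1a : dot e1 a = c by rewrite dotC FRa.
have e2a : dot e2 a = c by rewrite dotC FRa.
have [z1 Hz1] := hcryst (FRP e1 e1F) g2P.
have [z2 Hz2] := hcryst (FRP e2 e2F) g2P.
have P1ge : 1 <= 2 * dot g2 e1 / dot e1 e1.
  rewrite Hz1 ler1z -gtz0_ge1 -(ltr0z R) -Hz1 divr_gt0 ?mulr_gt0 //.
  by apply: dot_gt0; apply: (root_nz nz); apply: FRP.
have Q1ge : 1 <= 2 * dot g2 e2 / dot e2 e2.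
  rewrite Hz2 ler1z -gtz0_ge1 -(ltr0z R) -Hz2 divr_gt0 ?mulr_gt0 //.
  by apply: dot_gt0; apply: (root_nz nz); apply: FRP.
have yP : - (g2 *m refl e2 *m refl e1) \in Phi.
  apply: (neg_root nz hrefl); apply: hrefl; first exact: FRP.
  by apply: hrefl => //; apply: FRP.
have := ale _ yP; rewrite dotNr dotC !dot_reflE e1a e2a (dotC e2 e1) e12 mulr0 subr0.
have ga : dot g2 a <= c by rewrite dotC ale.
move: P1ge Q1ge; set P1 := _ / dot e1 e1; set Q1 := _ / dot e2 e2 => P1ge Q1ge.
move=> ineq.
have ag : dot a g2 = c.
  rewrite dotC; nra.
by move: g2h; rewrite -perp0 (inV _ g2P ag).
Qed.

End Irr.

Theorem proposition3p2 (R : realType) (n : nat) (Phi : seq 'rV[R]_n)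
    (Pi omega : 'I_n -> 'rV[R]_n) :
  (2 <= n)%N ->
  is_root_system Phi -> irreducible Phi -> is_base Phi Pi ->
  is_coweights Pi omega ->
  exists H : {set 'I_n},
    (forall V : {vspace 'rV[R]_n},
        in_HPhi Phi V <->
        exists (w : 'M[R]_n) (k : 'I_n),
          [/\ in_weyl Phi w, k \in H & is_perp V (omega k *m w)]) /\
    (forall h, h \in H -> irreducible (parabolic Phi Pi h)).
Proof.
move=> n2 [nz hspan hred hrefl hcryst] hirr hbase hcow.
exists (Hset Phi omega); split; last first.
  by move=> h hH; exact: (irr_part n2 nz hspan hrefl hcryst hirr hbase hcow hH).
move=> V; split; first exact: (fwd n2 nz hspan hrefl hbase hcow).
case=> w [k [wW kH pV]].
move: kH; rewrite inE => /boolp.asboolP [V0 [HV0 perp0]].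
have [w' [w'W wK w'K HVw]] := HPhi_img nz hrefl wW HV0.
suff -> : V = img w V0 by [].
apply/vspaceP => y; rewrite pV (mem_img wK w'K) perp0.
by rewrite -(weyl_dot nz (y *m w') (omega k) wW) w'K.
Qed.
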